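(* For every state $(s,t)$ and price $p\in[p_l,p_h]$, \[ \big\|\widehat P_n(\cdot\mid s,p)-\widetilde P_n(\cdot\mid s,p)\big\|_1\le\frac{|\mu_n(p)-h(p)|}{\sigma_n(p)}. \]
   Context: Let $s\in\{0,1,\dots,C\}$ and $p\in[p_l,p_h]$. Let $\mu_n(p)\in\mathbb{R}$ and $\sigma_n(p)>0$ be the posterior mean and standard deviation of a Gaussian process demand model in season $n$, and $h(p)\in\mathbb{R}$ the true expected demand at price $p$. Define intervals $I_0=(-\infty,\tfrac12)$, $I_q=[q-\tfrac12,q+\tfrac12]$ for $0<q<s$, $I_s=[s-\tfrac12,\infty)$ (when $s=0$, $I_0=\mathbb{R}$), and for $q\in\{0,\dots,s\}$ \[ \widehat P_n(q\mid s,p)=\int_{I_q}\mathcal{N}(y;\mu_n(p),\sigma_n^2(p))\,dy,\qquad \widetilde P_n(q\mid s,p)=\int_{I_q}\mathcal{N}(y;h(p),\sigma_n^2(p))\,dy, \] i.e. Gaussian mass in unit bins around integers, with all mass outside $[-\tfrac12,s+\tfrac12)$ assigned to the endpoints $q=0$ or $q=s$. $\|\cdot\|_1$ is the $\ell_1$ norm over $q\in\{0,\dots,s\}$. *)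

(* Defs.v *)
From HB Require Import structures.
From mathcomp Require Import all_boot all_order all_algebra.
From mathcomp Require Import all_classical all_reals all_analysis.

Set Implicit Arguments.
Unset Strict Implicit.
Unset Printing Implicit Defensive.

Import Order.TTheory GRing.Theory Num.Theory.
Local Open Scope classical_set_scope.
Local Open Scope ring_scope.

Definition bin {R : realType} (s q : nat) : set R :=
  if s == 0%N then setT
  else if q == 0%N then [set` `]-oo, (2^-1 : R)[ ]
  else if q == s then [set` `[(s%:R - 2^-1 : R), +oo[ ]
  else [set` `[(q%:R - 2^-1 : R), q%:R + 2^-1] ].

Definition binmass {R : realType} (m sd : R) (s q : nat) : R :=
  fine (normal_prob m sd (bin s q)).

Definition binl1 {R : realType} (m1 m2 sd : R) (s : nat) : R :=
  \sum_(q < s.+1) `| binmass m1 sd s q - binmass m2 sd s q |.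

(* Main.v *)
Require Import Defs.
From HB Require Import structures.
From mathcomp Require Import all_boot all_order all_algebra.
From mathcomp Require Import all_classical all_reals all_analysis.
From mathcomp Require Import lra ring measurable_realfun.
Import Order.TTheory GRing.Theory Num.Theory.
Import numFieldTopology.Exports.
Local Open Scope classical_set_scope.
Local Open Scope ring_scope.
Lemma variation (R : realType) (D : R -> R) (M c : R) (x : nat -> R) :
  (forall i, x i <= x i.+1) ->
  (forall t, 0 <= D t <= M) ->
  (forall s t, s <= t -> t <= c -> D s <= D t) ->
  (forall s t, c <= s -> s <= t -> D t <= D s) ->
  forall k, `|D (x 0%N)| + \sum_(i < k) `|D (x i.+1) - D (x i)| + `|D (x k)| <= M *+ 2.
Proof.
move=> xinc DM Dinc Ddec k.
have key : forall k, (D (x 0%N) + \sum_(i < k) `|D (x i.+1) - D (x i)| <= M *+ 2 - D (x k))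
   /\ (x k <= c -> D (x 0%N) + \sum_(i < k) `|D (x i.+1) - D (x i)| <= D (x k)).
  elim=> [|n [IH1 IH2]].
    rewrite big_ord0 addr0; have /andP[h1 h2] := DM (x 0%N).
    by split => [|_]; rewrite ?mulr2n; lra.
  rewrite big_ord_recr /= addrA.
  set V := (D (x 0%N) + _) in IH1 IH2 *.
  have /andP[a1 a2] := DM (x n); have /andP[b1 b2] := DM (x n.+1).
  have xn := xinc n.
  have [xc|xc] := lerP (x n.+1) c.
    have xnc : x n <= c by apply: le_trans xc.
    have h := IH2 xnc.
    have hD := Dinc _ _ xn xc.
    have : `|D (x n.+1) - D (x n)| = D (x n.+1) - D (x n) by rewrite ger0_norm // subr_ge0.
    move=> ->; split => [|_]; rewrite ?mulr2n; lra.
  split => [|]; last by move=> h; lra.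
  have [xnc|xnc] := lerP (x n) c.
    have h := IH2 xnc.
    have : `|D (x n.+1) - D (x n)| <= M *+ 2 - D (x n.+1) - V.
      rewrite ler_norml; apply/andP; split; rewrite mulr2n; lra.
    lra.
  have hD := Ddec _ _ (ltW xnc) xn.
  have : `|D (x n.+1) - D (x n)| = D (x n) - D (x n.+1).
    by rewrite ler0_norm ?subr_le0 // opprB.
  move=> ->; lra.
have [k1 _] := key k.
have /andP[a1 _] := DM (x 0%N); have /andP[b1 _] := DM (x k).
rewrite (ger0_norm a1) (ger0_norm b1); lra.
Qed.

Section S.
Variables (R : realType) (sg : R).
Hypothesis sg0 : 0 < sg.
Notation mu := (@lebesgue_measure R).

Lemma pdf_shift m d x : normal_pdf m sg (x + d) = normal_pdf (m - d) sg x.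
Proof.
rewrite /normal_pdf gt_eqF// /normal_fun.
have -> : x + d - m = x - (m - d) by rewrite opprB addrA (addrAC x).
by [].
Qed.

Lemma shiftP m d b :
  normal_prob m sg `]-oo, b + d] = normal_prob (m - d) sg `]-oo, b].
Proof.
set F := fun x : R => x + d.
have F'E : F^`()%classic = cst 1.
  apply/funext => x; rewrite /F derive1E deriveD// derive_cst derive_id addr0//.
have -> : b + d = F b by [].
rewrite /normal_prob (@increasing_ge0_integration_by_substitutionNy _ F).
- apply: eq_integral => x _; by rewrite F'E !fctE /= mulr1 -pdf_shift.
- by move=> x y _ _; rewrite /F ltrD2r.
- by rewrite F'E => x _; exact: cvg_cst.
- by rewrite F'E; exact: is_cvg_cst.
- by rewrite F'E; exact: cvg_cst.
- split; first by move=> x _; rewrite /F; exact: derivableD.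
  apply: cvg_at_left_filter; rewrite /F.
  apply: (@cvgD _ R^o); [exact: cvg_id|exact: cvg_cst].
- exact: cvg_addrr_Ny.
- apply: continuous_subspaceT => x; apply: continuous_normal_pdf.
  by rewrite gt_eqF.
- by move=> x _; exact: normal_pdf_ge0.
Qed.
Arguments normal_prob : simpl never.
Section M.
Variable m : R.
Local Notation P := (normal_prob m sg).
Definition Phi x := fine (P `]-oo, x]).

Lemma PU (A B : set R) : measurable A -> measurable B -> A `&` B = set0 ->
  P (A `|` B) = (P A + P B)%E.
Proof. by move=> *; exact: measureU. Qed.

Lemma PE A : measurable A -> P A = (fine (P A))%:E.
Proof. by move=> mA; rewrite fineK// fin_num_measure. Qed.

Lemma Pset1 a : P [set a] = 0%E.
Proof. by rewrite /normal_prob integral_set1. Qed.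

Lemma P_Nyo a : P `]-oo, a[ = P `]-oo, a].
Proof.
rewrite -(@setUitv1 _ _ _ a true)//= PU// ?Pset1 ?adde0//.
apply/seteqP; split => x //=; rewrite in_itv/= => -[] + xa; rewrite xa ltxx.
by [].
Qed.

Lemma Phi_Nyo a : fine (P `]-oo, a[) = Phi a.
Proof. by rewrite P_Nyo. Qed.

Lemma Phi_cc a b : a <= b -> fine (P `[a, b]) = Phi b - Phi a.
Proof.
move=> ab; rewrite /Phi (@itv_bndbnd_setU _ R -oo%O (BLeft a) (BRight b)) ?bnd_simp//.
rewrite PU//; last first.
  apply/seteqP; split => x //=; rewrite !in_itv/= => -[xa /andP[ax _]].
  by move: (lt_le_trans xa ax); rewrite ltxx.
rewrite P_Nyo [fine (P _ + P _)%E]fineD ?fin_num_measure//.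
by rewrite addrAC subrr add0r.
Qed.

Lemma Phi_oc a b : a <= b -> fine (P `]a, b]) = Phi b - Phi a.
Proof.
move=> ab; rewrite /Phi (@itv_bndbnd_setU _ R -oo%O (BRight a) (BRight b)) ?bnd_simp//.
rewrite PU//; last first.
  apply/seteqP; split => x //=; rewrite !in_itv/= => -[xa /andP[ax _]].
  by move: (le_lt_trans xa ax); rewrite ltxx.
rewrite [fine (P _ + P _)%E]fineD ?fin_num_measure//.
by rewrite addrAC subrr add0r.
Qed.

Lemma Phi_cy a : fine (P `[a, +oo[) = 1 - Phi a.
Proof.
have := @itv_setU_setT _ R true a.
move=> /(congr1 P); rewrite probability_setT PU//; last first.
  apply/seteqP; split => x //=; rewrite !in_itv/= => -[xa /andP[ax _]].
  by move: (lt_le_trans xa ax); rewrite ltxx.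
move=> /(congr1 fine); rewrite [fine (P _ + P _)%E]fineD ?fin_num_measure// -Phi_Nyo => h.
rewrite -[1]/(fine (1%E : \bar R)) -h.
by rewrite addrAC subrr add0r.
Qed.

Lemma Phi_setT : fine (P setT) = 1.
Proof. by rewrite probability_setT. Qed.

End M.

Lemma P_mono m (A B : set R) : measurable A -> measurable B -> A `<=` B ->
  fine (normal_prob m sg A) <= fine (normal_prob m sg B).
Proof.
move=> mA mB AB; rewrite fine_le ?fin_num_measure//.
by apply: le_measure => //; rewrite inE.
Qed.

Lemma pdf_le m1 m2 y : (y - m1) ^+ 2 <= (y - m2) ^+ 2 ->
  normal_pdf m2 sg y <= normal_pdf m1 sg y.
Proof.
move=> h; rewrite /normal_pdf gt_eqF// /normal_fun.
rewrite ler_pM2l ?normal_peak_gt0 ?gt_eqF// ler_expR !mulNr lerN2.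
rewrite ler_pM2r// invr_gt0 pmulrn_lgt0// exprn_gt0//.
Qed.

Lemma P_cmp m1 m2 (A : set R) : measurable A ->
  (forall y, A y -> (y - m1) ^+ 2 <= (y - m2) ^+ 2) ->
  fine (normal_prob m2 sg A) <= fine (normal_prob m1 sg A).
Proof.
move=> mA h; rewrite fine_le ?fin_num_measure//.
rewrite /normal_prob; apply: ge0_le_integral => //.
all: first [by move=> x _; rewrite lee_fin normal_pdf_ge0
  | by apply/measurable_EFinP; apply: measurable_funTS; exact: measurable_normal_pdf
  | by move=> x Ax; rewrite lee_fin; apply: pdf_le; apply: h].
Qed.

Lemma P_ub m a b : a <= b -> fine (normal_prob m sg `]a, b]) <= (b - a) * normal_peak sg.
Proof.
move=> ab; rewrite -lee_fin fineK ?fin_num_measure//.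
rewrite /normal_prob.
apply: (@le_trans _ _ (\int[lebesgue_measure]_(x in `]a, b]) (cst (normal_peak sg)%:E x))%E).
  apply: ge0_le_integral => //.
  all: try first [by move=> x _; rewrite lee_fin normal_pdf_ge0
  | by move=> x _; rewrite lee_fin normal_peak_ge0
  | by apply/measurable_EFinP; apply: measurable_funTS; exact: measurable_normal_pdf
  | by move=> x _; rewrite lee_fin normal_pdf_ub// gt_eqF].
rewrite integral_cst// [X in (_ * X)%E]lebesgue_measure_itv/= lte_fin.
case: ltgtP ab => // [ab _|-> _].
  by rewrite -EFinD -EFinM lee_fin mulrC.
by rewrite mule0 subrr mul0r.
Qed.

Definition xx (i : nat) : R := i%:R + 2^-1.

Lemma bm0 m k : binmass m sg k.+1 0 = Phi m (2^-1).
Proof. by rewrite /binmass /bin /= Phi_Nyo. Qed.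

Lemma bmS m k i : (i < k)%N -> binmass m sg k.+1 i.+1 = Phi m (xx i.+1) - Phi m (xx i).
Proof.
move=> ik; rewrite /binmass /bin /=.
have -> : (i.+1 == k.+1)%N = false by apply/negbTE; rewrite eqSS neq_ltn ik.
have e : i.+1%:R - 2^-1 = xx i :> R by rewrite /xx -addn1 natrD; field.
rewrite /= e -Phi_cc //.
by rewrite /xx lerD2r ler_nat.
Qed.

Lemma bmlast m k : binmass m sg k.+1 k.+1 = 1 - Phi m (xx k).
Proof.
have e : k.+1%:R - 2^-1 = xx k :> R by rewrite /xx -addn1 natrD; field.
by rewrite /binmass /bin /= eqxx e -Phi_cy.
Qed.

Lemma peak_bound : normal_peak sg *+ 2 <= sg^-1.
Proof.
rewrite /normal_peak.
have hs : 2 * sg <= Num.sqrt (sg ^+ 2 * pi *+ 2).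
  rewrite -(@ger0_norm _ (2 * sg)); last by rewrite mulr_ge0 // ltW.
  rewrite -sqrtr_sqr ler_sqrt; last by rewrite mulrn_wge0 // mulr_ge0 ?sqr_ge0 ?pi_ge0.
  have hp := @pi_ge2 R; have hq : 0 <= sg ^+ 2 by rewrite sqr_ge0.
  rewrite exprMn -mulr_natr !expr2 in hq *; nra.
have hsq : 0 < Num.sqrt (sg ^+ 2 * pi *+ 2).
  by apply: lt_le_trans hs; rewrite mulr_gt0.
set q := Num.sqrt _ in hs hsq *.
rewrite -mulr_natl -subr_ge0.
have -> : sg^-1 - 2%:R * q^-1 = (q - 2 * sg) / (sg * q).
  by field; rewrite ?gt_eqF.
apply: divr_ge0; first lra.
by rewrite mulr_ge0 // ltW.
Qed.

Lemma Phi_shift a b x : a <= b -> Phi b x = Phi a (x - (b - a)).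
Proof.
move=> ab; rewrite /Phi.
have := shiftP b (b - a) (x - (b - a)); rewrite subrK.
have -> : b - (b - a) = a by ring.
by move=> ->.
Qed.

Lemma D_bounds a b x : a <= b ->
  0 <= Phi a x - Phi b x <= (b - a) * normal_peak sg.
Proof.
move=> ab; rewrite (Phi_shift a b x ab) -Phi_oc; last by rewrite lerBlDr lerDl subr_ge0.
apply/andP; split; first by rewrite fine_ge0 // measure_ge0.
have e : x - (x - (b - a)) = b - a by ring.
rewrite -[in leRHS]e; apply: P_ub; lra.
Qed.

Lemma D_diff a b s t : s <= t ->
  (Phi a t - Phi b t) - (Phi a s - Phi b s) =
  fine (normal_prob a sg `]s, t]) - fine (normal_prob b sg `]s, t]).
Proof. by move=> st; rewrite !Phi_oc //; ring. Qed.

Lemma binl1_le a b s : a <= b -> binl1 a b sg s <= (b - a) / sg.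
Proof.
move=> ab.
have hba : 0 <= b - a by rewrite subr_ge0.
case: s => [|k].
  rewrite /binl1 big_ord1 /binmass /bin eqxx !Phi_setT subrr normr0.
  by rewrite divr_ge0 // ltW.
set D := fun t => Phi a t - Phi b t.
have H : binl1 a b sg k.+1 =
    `|D (xx 0%N)| + \sum_(i < k) `|D (xx i.+1) - D (xx i)| + `|D (xx k)|.
  rewrite /binl1 big_ord_recl big_ord_recr /= !bm0 !bmlast.
  have -> : xx 0 = 2^-1 by rewrite /xx add0r.
  rewrite -[RHS]addrA; congr (_ + (_ + _)); last first.
    by rewrite /D -normrN; congr `|_|; ring.
  apply: eq_bigr => i _; rewrite /bump add1n !bmS //; congr `|_|; rewrite /D; ring.
rewrite H.
apply: le_trans (@variation R D ((b - a) * normal_peak sg) ((a + b) / 2) xx _ _ _ _ k) _.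
- by move=> i; rewrite /xx lerD2r ler_nat.
- by move=> t; apply: D_bounds.
- move=> u t ut tc; rewrite -subr_ge0 /D D_diff // subr_ge0.
  apply: P_cmp => // y /=; rewrite in_itv /= => /andP[_ yt].
  have : y <= (a + b) / 2 by apply: le_trans tc.
  move=> h2; nra.
- move=> u t cu ut; rewrite -subr_ge0.
  have -> : D u - D t = - (D t - D u) by ring.
  rewrite /D D_diff // oppr_ge0 subr_le0.
  apply: P_cmp => // y /=; rewrite in_itv /= => /andP[uy _].
  have : (a + b) / 2 < y by apply: le_lt_trans uy.
  move=> h2; nra.
- by rewrite -mulrnAr; apply: ler_wpM2l => //; exact: peak_bound.
Qed.
End S.

Theorem lemma5 (R : realType) (C : nat) (pl ph : R)
  (mu sigma : nat -> R -> R) (h : R -> R) (n : nat)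
  (sigma_pos : forall p, pl <= p <= ph -> 0 < sigma n p) :
  forall (s : nat), (s <= C)%N -> forall p : R, pl <= p <= ph ->
    binl1 (mu n p) (h p) (sigma n p) s <= `|mu n p - h p| / sigma n p.
Proof.
move=> s _ p hp; have sp := sigma_pos p hp.
have [le|lt] := lerP (mu n p) (h p).
  exact: binl1_le.
have -> : binl1 (mu n p) (h p) (sigma n p) s = binl1 (h p) (mu n p) (sigma n p) s.
  by apply: eq_bigr => i _; rewrite distrC.
by apply: binl1_le => //; exact: ltW.
Qed.
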